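(* For every integer $n\ge 7$, the wheel $W_{1,n}$ satisfies $$\dim_{n\ell}(W_{1,n})=\left\lfloor \frac{2n}{5}\right\rfloor.$$
   Context: The wheel $W_{1,n}=K_1+C_n$ is obtained from the cycle $C_n$ by adding one vertex (the center) adjacent to all cycle vertices. $d(u,v)$ is the shortest-path distance. A set $X$ of vertices resolves two vertices $u,v$ if some $x\in X$ satisfies $d(u,x)\neq d(v,x)$. $X$ is a nonlocal resolving set if it resolves every pair of distinct non-adjacent vertices; the nonlocal metric dimension $\dim_{n\ell}$ is the minimum size of a nonlocal resolving set. *)

(* Defs.v *)
From mathcomp Require Import all_boot all_order.
Set Implicit Arguments. Unset Strict Implicit. Unset Printing Implicit Defensive.

Definition ball (T : finType) (e : rel T) (k : nat) (u : T) : {set T} :=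
  iter k (fun S : {set T} => S :|: [set y | [exists x in S, e x y]]) [set u].

(* Shortest-path distance: least k with v within k steps of u (k < #|T|
   always suffices when v is reachable; unreachable pairs get #|T|, which
   never happens for connected graphs such as wheels). *)
Definition gdist (T : finType) (e : rel T) (u v : T) : nat :=
  find (fun k => v \in ball e k u) (iota 0 #|T|).

Definition resolves (T : finType) (e : rel T) (X : {set T}) (u v : T) : Prop :=
  exists2 x, x \in X & gdist e u x != gdist e v x.

Definition nonlocal_resolving (T : finType) (e : rel T) (X : {set T}) : Prop :=
  forall u v : T, u != v -> ~~ e u v -> resolves e X u v.

Definition is_nl_dim (T : finType) (e : rel T) (d : nat) : Prop :=
  (exists X : {set T}, nonlocal_resolving e X /\ #|X| = d) /\
  (forall X : {set T}, nonlocal_resolving e X -> d <= #|X|).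

(* Wheel W_{1,n}: vertices option 'I_n, None is the center,
   Some i are the cycle vertices 0..n-1, with i ~ i+1 (mod n). *)
Definition cyc_adj (n : nat) (i j : 'I_n) : bool :=
  (j == (i.+1 %% n) :> nat) || (i == (j.+1 %% n) :> nat).

Definition wheel_adj (n : nat) : rel (option 'I_n) := fun u v =>
  match u, v with
  | None, None => false
  | None, Some _ | Some _, None => true
  | Some i, Some j => (i != j) && cyc_adj i j
  end.

(* Main.v *)
Require Import Defs.
From mathcomp Require Import all_boot all_order zify.
Set Implicit Arguments. Unset Strict Implicit. Unset Printing Implicit Defensive.

Definition pY (q r i : nat) : bool :=
  ((i < 5 * q) && ((i %% 5 == 0) || (i %% 5 == 2))) ||
  ((3 <= r) && (i == 5 * q + r - 2)).

Lemma mod5 t s : s < 5 -> (5 * t + s) %% 5 = s.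
Proof. by move=> hs; rewrite mulnC modnMDl modn_small. Qed.

Lemma pY_blk q r t s : t < q -> s < 5 -> pY q r (5 * t + s) = (s == 0) || (s == 2).
Proof.
move=> tq s5; rewrite /pY mod5 //.
have -> : 5 * t + s < 5 * q by lia.
case: ((s == 0) || (s == 2)) => //=.
apply/negbTE/negP => /andP[h1 /eqP h2]; lia.
Qed.

Lemma pY_tail q r j : pY q r (5 * q + j) = (3 <= r) && (j == r - 2).
Proof.
rewrite /pY ltnNge leq_addr /=.
case: (leqP 3 r) => h //=.
by rewrite -addnBA ?eqn_add2l //; lia.
Qed.

Lemma decomp y : y = 5 * (y %/ 5) + y %% 5.
Proof. by rewrite mulnC -divn_eq. Qed.

Lemma pY_A q r y : 7 <= 5 * q + r -> r < 5 -> y < 5 * q + r -> pY q r y ->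
  (y.+2 < 5 * q + r /\ pY q r y.+2) \/ (y.+2 = 5 * q + r /\ pY q r 0) \/
  (2 <= y /\ pY q r (y - 2)).
Proof.
move=> n7 r5 yn; rewrite {1}/pY => /orP[/andP[lt5 hs]|/andP[r3 /eqP ey]].
  have tq : y %/ 5 < q by rewrite ltn_divLR // mulnC.
  have s5 : y %% 5 < 5 by rewrite ltn_mod.
  have ey := decomp y.
  move: (y %/ 5) (y %% 5) ey tq s5 hs => t s ey tq s5 /orP[/eqP s0|/eqP s2]; subst y s.
    left; split; first by lia.
    by rewrite -addn2 -addnA pY_blk.
  right; right; split; first by lia.
  by rewrite -addnBA // subnn addn0 -[5 * t]addn0 pY_blk.
right; left; split; first by lia.
have q1 : 0 < q by lia.
by rewrite -[0]/(5 * 0 + 0) pY_blk.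
Qed.

Lemma pY_0 q r : 7 <= 5 * q + r -> r < 5 -> pY q r 0.
Proof. move=> n7 r5; have q1 : 0 < q by lia. by rewrite -[0]/(5 * 0 + 0) pY_blk. Qed.

Lemma pY_emp q r a : 7 <= 5 * q + r -> r < 5 -> a < 5 * q + r ->
  ~~ pY q r a -> (a.+1 < 5 * q + r -> ~~ pY q r a.+1) ->
  (a.+1 = 5 * q + r -> ~~ pY q r 0) -> (0 < a -> ~~ pY q r a.-1) ->
  a.+1 = 5 * q \/ a = 5 * q.
Proof.
move=> n7 r5 an h0 h1 h1' h2.
case: (ltnP a.+1 (5 * q)) => ha.
  have tq : a %/ 5 < q by rewrite ltn_divLR // mulnC; lia.
  have s5 : a %% 5 < 5 by rewrite ltn_mod.
  have ea := decomp a.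
  move: (a %/ 5) (a %% 5) ea tq s5 => t s ea tq s5; subst a.
  case: s s5 h0 h1 h2 ha {an h1'} => [|[|[|[|[|s]]]]] // _ h0 h1 h2 ha; exfalso.
  - by rewrite pY_blk in h0.
  - have e : (5 * t + 1).-1 = 5 * t + 0 by lia.
    by rewrite e pY_blk // in h2; move: (h2 ltac:(lia)).
  - by rewrite pY_blk in h0.
  - have e : (5 * t + 3).-1 = 5 * t + 2 by lia.
    by rewrite e pY_blk // in h2; move: (h2 ltac:(lia)).
  - have e : (5 * t + 4).+1 = 5 * t.+1 + 0 by lia.
    by rewrite e pY_blk // in h1; [move: (h1 ltac:(lia)) | lia].
case: (leqP a (5 * q)) => hb; first by lia.
have ea : a = 5 * q + (a - 5 * q) by lia.
move: (a - 5 * q) ea => j ea; subst a.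
have : j.+1 = r \/ (3 <= r /\ j = r - 2) \/ (3 <= r /\ j.+1 = r - 2) by lia.
case=> [e1|[[r3 e1]|[r3 e1]]].
- by exfalso; move: (h1' ltac:(lia)); rewrite pY_0.
- by rewrite pY_tail r3 e1 eqxx in h0.
- by move: (h1 ltac:(lia)); rewrite -addnS pY_tail r3 e1 eqxx.
Qed.

Definition c5 (i : nat) : bool := (i %% 5 == 0) || (i %% 5 == 2).

Lemma count_c5 Q : count c5 (iota 0 (5 * Q)) = 2 * Q.
Proof.
elim: Q => [//|Q IH].
rewrite mulnS addnC iotaD count_cat IH add0n -[5 * Q]addn0 iotaDl count_map.
rewrite (@eq_count _ _ c5) //; last by move=> k /=; rewrite /c5 -[5 * Q]mulnC modnMDl.
have -> : count c5 (iota 0 5) = 2 by []. 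
lia.
Qed.

Lemma count_pY q r : r < 5 -> count (pY q r) (iota 0 (5 * q + r)) = 2 * q + (3 <= r).
Proof.
move=> r5.
rewrite iotaD count_cat add0n.
rewrite (@eq_in_count _ _ c5); last first.
  move=> i; rewrite mem_iota add0n => /andP[_ hi].
  rewrite /pY /c5 hi /=.
  have -> : (3 <= r) && (i == 5 * q + r - 2) = false.
    by apply/negbTE/negP => /andP[h1 /eqP h2]; lia.
  by rewrite orbF.
rewrite count_c5; congr (_ + _).
rewrite -[5 * q]addn0 iotaDl count_map.
rewrite (@eq_in_count _ _ (fun k => (3 <= r) && (k == r - 2))); last first.
  move=> k; rewrite mem_iota add0n => /andP[_ hk] /=.
  by rewrite pY_tail.
by case: r r5 => [|[|[|[|[|r]]]]].
Qed.

Section W.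
Variable n : nat.
Hypothesis n7 : 7 <= n.
Notation e := (@wheel_adj n).

Lemma wadj_irr u : e u u = false.
Proof. by case: u => [i|] //=; rewrite eqxx. Qed.

Lemma ball0 u : ball e 0 u = [set u].
Proof. by []. Qed.

Lemma in_ball1 u v : (v \in ball e 1 u) = (v == u) || e u v.
Proof.
rewrite /ball /= !inE; congr (_ || _); apply/existsP/idP => [[x /andP[]]|H].
  by rewrite inE => /eqP ->.
by exists u; rewrite inE eqxx.
Qed.

Lemma in_ball2 u v : v \in ball e 2 u.
Proof.
have -> : ball e 2 u = ball e 1 u :|: [set y | [exists x in ball e 1 u, e x y]] by [].
rewrite in_setU in_ball1 inE.
case: v => [j|].
  apply/orP; right; apply/existsP; exists None; rewrite in_ball1 /=.
  by case: u.
by case: u => [i|] /=; rewrite ?eqxx ?orbT.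
Qed.

Lemma gdistE u v : gdist e u v = if v == u then 0 else if e u v then 1 else 2.
Proof.
rewrite /gdist card_option card_ord.
have -> : n.+1 = (n - 2).+3 by lia.
rewrite /= inE.
case: eqP => [//|/eqP nvu].
have h1 := in_ball1 u v; rewrite /ball /= in h1; rewrite h1.
have h2 := in_ball2 u v; rewrite /ball /= in h2; rewrite h2.
by rewrite (negbTE nvu) /=; case: (e u v).
Qed.

Lemma specS (x : 'I_n) :
  (x.+1 < n /\ nat_of_ord (ordS x) = x.+1) \/ (x.+1 = n /\ nat_of_ord (ordS x) = 0).
Proof.
rewrite /ordS /=; case: (ltngtP x.+1 n) => h.
- by left; rewrite modn_small.
- by have := ltn_ord x; lia.
- by right; rewrite h modnn.
Qed.

Lemma specP (x : 'I_n) :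
  (0 < x /\ nat_of_ord (ord_pred x) = x.-1) \/ (x = 0 :> nat /\ nat_of_ord (ord_pred x) = n.-1).
Proof.
rewrite /ord_pred /=; have := ltn_ord x; case: (nat_of_ord x) => [|k] h /=.
- by right; rewrite add0n modn_small //; lia.
- left; split => //. rewrite modnDr modn_small //; lia.
Qed.

Ltac gen_ord :=
  repeat match goal with
  | |- context [nat_of_ord (@ordS n ?x)] =>
      move: (specS x); generalize (nat_of_ord (@ordS n x))
  | |- context [nat_of_ord (@ord_pred n ?x)] =>
      move: (specP x); generalize (nat_of_ord (@ord_pred n x))
  end.

Ltac ordlia a := rewrite -?(inj_eq (@ord_inj n)); gen_ord; move: (ltn_ord a); lia.

Lemma ordS_neq (i : 'I_n) : (ordS i == i) = false.
Proof. apply/negbTE; ordlia i. Qed.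

Lemma eqS_pred (i j : 'I_n) : (i == ordS j) = (j == ord_pred i).
Proof. by apply/eqP/eqP => [->|->]; rewrite ?ordSK ?ord_predK. Qed.

Lemma cycE (i j : 'I_n) : cyc_adj i j = (j == ordS i) || (j == ord_pred i).
Proof. by rewrite /cyc_adj -eqS_pred. Qed.

Lemma cyc_sym (i j : 'I_n) : cyc_adj i j = cyc_adj j i.
Proof. by rewrite /cyc_adj orbC. Qed.

Lemma wadjS (i j : 'I_n) : e (Some i) (Some j) = cyc_adj i j.
Proof.
rewrite /= cycE; case: eqVneq => [->|//]; rewrite eq_sym ordS_neq /=.
by apply/esym/negbTE; ordlia i.
Qed.

Lemma ar1 (a : 'I_n) : (ordS a == ord_pred a) = false.
Proof. apply/negbTE; ordlia a. Qed.
Lemma ar2 (a : 'I_n) : cyc_adj (ordS a) (ord_pred a) = false.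
Proof. rewrite cycE; apply/negbTE; rewrite negb_or; ordlia a. Qed.
Lemma ar3 (a : 'I_n) : cyc_adj a (ordS (ordS (ordS a))) = false.
Proof. rewrite cycE; apply/negbTE; rewrite negb_or; ordlia a. Qed.
Lemma ar4 (a : 'I_n) : cyc_adj a (ord_pred (ord_pred (ord_pred a))) = false.
Proof. rewrite cycE; apply/negbTE; rewrite negb_or; ordlia a. Qed.
Lemma ar5 (a : 'I_n) : cyc_adj (ordS (ordS a)) (ord_pred a) = false.
Proof. rewrite cycE; apply/negbTE; rewrite negb_or; ordlia a. Qed.

Section Lower.
Variable X : {set option 'I_n}.
Hypothesis HX : nonlocal_resolving e X.
Let P (i : 'I_n) : bool := Some i \in X.

Lemma key a b : a != b -> ~~ cyc_adj a b -> ~~ P a -> ~~ P b ->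
  (forall y, P y -> cyc_adj a y = cyc_adj b y) -> False.
Proof.
move=> ab nab Pa Pb H.
have [|| x xX] := HX (u:=Some a) (v:=Some b); first by [].
  by rewrite wadjS.
rewrite !gdistE; case: x xX => [y|] yX /=; last by [].
have ya : (Some y == Some a) = false by apply/negbTE; apply: contraNneq Pa => -[<-].
have yb : (Some y == Some b) = false by apply/negbTE; apply: contraNneq Pb => -[<-].
have ay : a != y by apply: contraNneq Pa => ->.
have by' : b != y by apply: contraNneq Pb => ->.
rewrite ya yb ay by' /= (H y yX).
by case: (cyc_adj b y).
Qed.

Definition Ae i := ~~ P i && ~~ P (ordS i) && ~~ P (ord_pred i).
Definition Be i := ~~ P i && (P (ordS i) != P (ord_pred i)).

Lemma Ae_code i y : Ae i -> P y -> cyc_adj i y = false.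
Proof.
case/andP => /andP[_ h1] h2 Py; rewrite cycE.
apply/negbTE; rewrite negb_or; apply/andP; split.
  by apply: contraNneq h1 => <-.
by apply: contraNneq h2 => <-.
Qed.

Lemma Ae_card : #|[set i | Ae i]| <= 2.
Proof.
case: (pickP Ae) => [a Aa|none]; last first.
  suff -> : [set i | Ae i] = set0 by rewrite cards0.
  by apply/setP => i; rewrite !inE none.
have sub : forall b, Ae b -> [|| b == a, b == ordS a | b == ord_pred a].
  move=> b Ab; apply/negPn/negP => /norP [ba] /norP [bS bP].
  apply: (key (a:=a) (b:=b)).
  - by rewrite eq_sym.
  - by rewrite cycE negb_or bS bP.
  - by case/andP: Aa => /andP[].
  - by case/andP: Ab => /andP[].
  - by move=> y Py; rewrite !Ae_code.
have notboth : ~~ (Ae (ordS a) && Ae (ord_pred a)).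
  apply/negP => /andP[h1 h2].
  apply: (key (a:=ordS a) (b:=ord_pred a)).
  - by rewrite ar1.
  - by rewrite ar2.
  - by case/andP: h1 => /andP[].
  - by case/andP: h2 => /andP[].
  - by move=> y Py; rewrite !Ae_code.
have c2 : forall b c : 'I_n, #|[set b; c]| <= 2 by move=> b c; rewrite cards2; case: (b != c).
case: (boolP (Ae (ordS a))) => hS.
  apply: leq_trans (c2 a (ordS a)); apply: subset_leq_card; apply/subsetP => b.
  rewrite !inE => Ab; case/or3P: (sub b Ab) => [->|->|/eqP bP]; rewrite ?orbT //.
  by subst b; rewrite hS Ab in notboth.
apply: leq_trans (c2 a (ord_pred a)); apply: subset_leq_card; apply/subsetP => b.
rewrite !inE => Ab; case/or3P: (sub b Ab) => [->|/eqP bS|->]; rewrite ?orbT //.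
by subst b; rewrite Ab in hS.
Qed.


Definition fB i := if P (ordS i) then ordS i else ord_pred i.

Lemma Be_code i z : Be i -> P z -> cyc_adj i z = (z == fB i).
Proof.
case/andP => _ hne Pz; rewrite cycE /fB.
case hS: (P (ordS i)) hne => /= hP.
  case: eqVneq => //= _; apply/negbTE; apply: contraNneq hP => <-; by rewrite Pz.
case: eqVneq => [zS|] //=.
by subst z; rewrite hS in Pz.
Qed.

Lemma fB_P i : Be i -> P (fB i).
Proof. case/andP => _; rewrite /fB; case h: (P (ordS i)) => /=; first by rewrite h. by case: (P (ord_pred i)). Qed.

Lemma fB_nb i : (i == ord_pred (fB i)) || (i == ordS (fB i)).
Proof. by rewrite /fB; case: (P (ordS i)); rewrite ?ordSK ?ord_predK eqxx ?orbT. Qed.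

Lemma Be_inj : {in [set i | Be i] &, injective fB}.
Proof.
move=> a b; rewrite !inE => Ba Bb fab.
case: (eqVneq a b) => // ab; exfalso.
apply: (key (a:=a) (b:=b)) => //.
- move: (fB_nb a) (fB_nb b) ab; rewrite -fab; move: (fB a) => y.
  case/orP => /eqP ha; case/orP => /eqP hb; rewrite ha hb => ab; rewrite ?eqxx // in ab *.
    by rewrite cyc_sym ar2.
  by rewrite ar2.
- by case/andP: Ba.
- by case/andP: Bb.
- by move=> y Py; rewrite !Be_code // fab.
Qed.

Lemma Be_card : #|[set i | Be i]| <= #|[set i | P i]|.
Proof.
rewrite -(card_in_imset Be_inj); apply: subset_leq_card; apply/subsetP => y.
case/imsetP => i; rewrite inE => Bi ->; rewrite inE; exact: fB_P.
Qed.


Lemma lower : (2 * n) %/ 5 <= #|X|.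
Proof.
have hk : #|[set i | P i]| <= #|X|.
  rewrite -(card_imset _ (@Some_inj _)); apply: subset_leq_card; apply/subsetP => x.
  by case/imsetP => i; rewrite inE => Pi ->.
have sumb : forall p : pred 'I_n, \sum_(i : 'I_n) (p i : nat) = #|[set i | p i]|.
  move=> p; rewrite -sum1_card [RHS]big_mkcond /=; apply: eq_bigr => i _; rewrite inE.
  by case: (p i).
have H2 : \sum_(i : 'I_n) 2 <= \sum_(i : 'I_n) ((P i : nat) + P i + Ae i + Ae i + Be i
           + P (ordS i) + P (ord_pred i)).
  apply: leq_sum => i _; rewrite /Ae /Be.
  by case: (P i); case: (P (ordS i)); case: (P (ord_pred i)).
rewrite big_const_ord iter_addn_0 !big_split /= in H2.
have eS : \sum_(i : 'I_n) (P (ordS i) : nat) = \sum_(i : 'I_n) (P i : nat).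
  by rewrite [RHS](reindex_inj (@ordS_inj n)).
have eP : \sum_(i : 'I_n) (P (ord_pred i) : nat) = \sum_(i : 'I_n) (P i : nat).
  by rewrite [RHS](reindex_inj (@ord_pred_inj n)).
rewrite eS eP !sumb in H2.
have := Ae_card; have := Be_card.
lia.
Qed.

End Lower.

Section Upper.
Variable P : pred 'I_n.
Definition Ae2 i := ~~ P i && ~~ P (ordS i) && ~~ P (ord_pred i).
Hypothesis HA : forall y, P y -> P (ordS (ordS y)) || P (ord_pred (ord_pred y)).
Hypothesis HB : forall a b, Ae2 a -> Ae2 b -> (a == b) || cyc_adj a b.

Lemma Ae2_code i y : Ae2 i -> P y -> cyc_adj i y = false.
Proof.
case/andP => /andP[_ h1] h2 Py; rewrite cycE.
apply/negbTE; rewrite negb_or; apply/andP; split.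
  by apply: contraNneq h1 => <-.
by apply: contraNneq h2 => <-.
Qed.

Lemma upper : nonlocal_resolving e (Some @: [set i | P i]).
Proof.
have memS : forall i, (Some i \in Some @: [set i | P i]) = P i.
  by move=> i; rewrite mem_imset ?inE //; exact: Some_inj.
move=> [a|] [b|] //= ab.
have ab' : a != b by [].
rewrite ab' /= => nab.
case Pa: (P a).
  exists (Some a); first by rewrite memS.
  have e1 : (Some a == Some b) = false by apply/negbTE.
  by rewrite !gdistE eqxx e1; case: (e _ _).
case Pb: (P b).
  exists (Some b); first by rewrite memS.
  have e1 : (Some b == Some a) = false by apply/negbTE; rewrite eq_sym.
  by rewrite !gdistE eqxx e1; case: (e _ _).
case: (boolP [exists y, P y && (cyc_adj a y != cyc_adj b y)]).
  case/existsP => y /andP[Py ne]; exists (Some y); first by rewrite memS.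
  have e1 : (Some y == Some a) = false by apply/negbTE; apply: contraFneq Pa => -[<-].
  have e2 : (Some y == Some b) = false by apply/negbTE; apply: contraFneq Pb => -[<-].
  rewrite !gdistE e1 e2 !wadjS.
  by move: ne; case: (cyc_adj a y); case: (cyc_adj b y).
rewrite negb_exists => /forallP H'.
have H : forall y, P y -> cyc_adj a y = cyc_adj b y.
  move=> y Py; have := H' y; rewrite Py /=; by case: (cyc_adj a y); case: (cyc_adj b y).
exfalso.
case hS: (P (ordS a)).
  have := H _ hS; rewrite [cyc_adj a _]cycE eqxx /= cycE => /esym/orP[/eqP bS|/eqP bP].
    by move/ordS_inj: bS => bS; rewrite bS eqxx in ab'.
  have eb : b = ordS (ordS a) by rewrite bP ord_predK.
  subst b; case/orP: (HA hS) => [h3|].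
    by have := H _ h3; rewrite ar3 cycE eqxx.
  rewrite ordSK => hp.
  by have := H _ hp; rewrite ar5 cycE eqxx orbT.
case hP: (P (ord_pred a)).
  have := H _ hP; rewrite [cyc_adj a _]cycE eqxx orbT cycE => /esym/orP[/eqP bS|/eqP bP].
    have eb : b = ord_pred (ord_pred a) by rewrite bS ordSK.
    subst b; case/orP: (HA hP) => [|h3].
      by rewrite ord_predK hS.
    by have := H _ h3; rewrite ar4 cycE eqxx orbT.
  by move/ord_pred_inj: bP => bP; rewrite bP eqxx in ab'.
have Aa : Ae2 a by rewrite /Ae2 Pa hS hP.
have Ab : Ae2 b.
  rewrite /Ae2 Pb /=; apply/andP; split; apply/negP => hb.
    by have := H _ hb; rewrite Ae2_code // cycE eqxx.
  by have := H _ hb; rewrite Ae2_code // cycE eqxx orbT.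
by case/orP: (HB Aa Ab) => h; [rewrite h in ab' | rewrite h in nab].
Qed.
End Upper.

Lemma valS_lt (x : 'I_n) : x.+1 < n -> nat_of_ord (ordS x) = x.+1.
Proof. by move=> h; rewrite /= modn_small. Qed.
Lemma valS_eq (x : 'I_n) : x.+1 = n -> nat_of_ord (ordS x) = 0.
Proof. by move=> h; rewrite /= h modnn. Qed.
Lemma valP_pos (x : 'I_n) : 0 < x -> nat_of_ord (ord_pred x) = x.-1.
Proof. by case: (specP x) => [[_ ->]|[-> _]]. Qed.

Section Constr.
Variables q r : nat.
Hypothesis nqr : n = 5 * q + r.
Hypothesis r5 : r < 5.
Let PY := fun i : 'I_n => pY q r i.

Lemma PY_A y : PY y -> PY (ordS (ordS y)) || PY (ord_pred (ord_pred y)).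
Proof.
rewrite /PY => hy.
have yn : nat_of_ord y < 5 * q + r by rewrite -nqr.
have n7' : 7 <= 5 * q + r by rewrite -nqr.
case: (pY_A n7' r5 yn hy) => [[h1 h2]|[[h1 h2]|[h1 h2]]].
- have e1 : nat_of_ord (ordS y) = y.+1 by apply: valS_lt; lia.
  have e2 : nat_of_ord (ordS (ordS y)) = y.+2 by rewrite valS_lt e1 //; lia.
  by rewrite e2 h2.
- have e1 : nat_of_ord (ordS y) = y.+1 by apply: valS_lt; lia.
  have e2 : nat_of_ord (ordS (ordS y)) = 0 by apply: valS_eq; rewrite e1; lia.
  by rewrite e2 h2.
- have e1 : nat_of_ord (ord_pred y) = y.-1 by apply: valP_pos; lia.
  have e2 : nat_of_ord (ord_pred (ord_pred y)) = y - 2 by rewrite valP_pos e1; lia.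
  by rewrite e2 h2 orbT.
Qed.

Lemma PY_emp a : Ae2 PY a -> (nat_of_ord a).+1 = 5 * q \/ nat_of_ord a = 5 * q.
Proof.
rewrite /Ae2 /PY -!andbA => /and3P[h0 h1 h2].
have n7' : 7 <= 5 * q + r by rewrite -nqr.
have an : nat_of_ord a < 5 * q + r by rewrite -nqr.
apply: (pY_emp n7' r5 an h0).
- by move=> h; rewrite -valS_lt //; move: h; rewrite -nqr.
- by move=> h; rewrite -(valS_eq (x:=a)) //; move: h; rewrite -nqr.
- by move=> h; rewrite -valP_pos.
Qed.

Lemma PY_HB a b : Ae2 PY a -> Ae2 PY b -> (a == b) || cyc_adj a b.
Proof.
move=> Aa Ab; case: (eqVneq a b) => //= ab; rewrite cycE.
have bn := ltn_ord b; have an := ltn_ord a.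
case: (PY_emp Aa) (PY_emp Ab) => ha [] hb.
- by exfalso; move: ab; rewrite -(inj_eq (@ord_inj n)); apply/negP/negPn/eqP; lia.
- apply/orP; left; apply/eqP; apply: ord_inj; rewrite valS_lt; lia.
- apply/orP; right; apply/eqP; apply: ord_inj; rewrite valP_pos; lia.
- by exfalso; move: ab; rewrite -(inj_eq (@ord_inj n)); apply/negP/negPn/eqP; lia.
Qed.
End Constr.
End W.

Lemma card_count n (p : pred nat) : #|[set i : 'I_n | p i]| = count p (iota 0 n).
Proof.
rewrite -sum1_card (eq_bigl (fun i : 'I_n => p i)); last by move=> i; rewrite inE.
by rewrite -(big_mkord p (fun _ => 1)) sum1_count /index_iota subn0.
Qed.

Theorem theorem4p1 (n : nat) : 7 <= n -> is_nl_dim (@wheel_adj n) ((2 * n) %/ 5).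
Proof.
move=> n7; split; last by move=> X HX; apply: lower.
have nqr : n = 5 * (n %/ 5) + n %% 5 by rewrite mulnC -divn_eq.
have r5 : n %% 5 < 5 by rewrite ltn_mod.
exists (Some @: [set i : 'I_n | pY (n %/ 5) (n %% 5) i]); split.
  apply: upper => //; [exact: PY_A | exact: PY_HB].
rewrite card_imset; last exact: Some_inj.
rewrite card_count.
have -> : iota 0 n = iota 0 (5 * (n %/ 5) + n %% 5) by rewrite -nqr.
rewrite count_pY //.
move: r5 nqr; move: (n %/ 5) (n %% 5) => q r r5 ->.
case: r r5 => [|[|[|[|[|r]]]]] //= _; lia.
Qed.
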